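(* Let $R$ be a commutative ring and $M$ a non-zero $R$-module. (1) If $M=\sum_{i=1}^n K_i$ is a minimal second representation of $M$ such that the ideals $Ann(K_1),\dots,Ann(K_n)$ are pairwise incomparable (i.e. $att^s(M)=Min(att^s(M))$) and $K_i\cap\sum_{j\neq i}K_j$ is a PS-hollow submodule of $M$ for all $i\in\{1,\dots,n\}$, then $M=\bigoplus_{i=1}^n K_i$ if and only if $K_i\cap K_j=0$ for all $i\neq j$. (2) Let $M$ be distributive and $M=\sum_{i=1}^n K_i$ a minimal PS-hollow representation, with $K_i$ $H_i$-PS-hollow, such that every submodule of $K_i$ is zero or strongly irreducible or $H_i$-PS-hollow. Then $M=\bigoplus_{i=1}^n K_i$.
   Context: A submodule $N\neq 0$ is second iff for every ideal $I\leq R$, $IN=N$ or $IN=0$. A minimal second representation of $M$ is $M=\sum_{i=1}^n K_i$ with each $K_i$ second, the ideals $Ann(K_i)$ pairwise distinct, and no $K_j$ contained in $\sum_{i\neq j}K_i$; $att^s(M)=\{Ann(K_i)\}$. An $R$-submodule $N\leq M$ is PS-hollow iff for every ideal $I$ and submodule $L$: $N\subseteq IM+L$ implies $N\subseteq IM$ or $N\subseteq L$. For PS-hollow $N$: $A_N=\{I: N\subseteq IM\}$, $H_N$ its minimal elements, $In(N)=\bigcap_{I\in H_N}IM$ ($=M$ if $H_N=\emptyset$); $N$ is $H$-PS-hollow iff PS-hollow with $H_N=H$. A minimal PS-hollow representation is $M=\sum_{i=1}^n K_i$ with each $K_i$ $H_i$-PS-hollow, $In(K_1),\dots,In(K_n)$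 pairwise incomparable, and $K_j\not\subseteq\sum_{i\neq j}K_i$ for all $j$. A proper submodule $N\lneq M$ is strongly irreducible iff for all submodules $A,B\leq M$, $A\cap B\subseteq N$ implies $A\subseteq N$ or $B\subseteq N$. $M$ is distributive iff its lattice of submodules is distributive. *)

(* Defs.v *)
From HB Require Import structures.
From mathcomp Require Import all_boot all_order all_algebra.
From mathcomp Require Import boolp classical_sets.
Set Implicit Arguments. Unset Strict Implicit. Unset Printing Implicit Defensive.
Import GRing.Theory.
Local Open Scope ring_scope.
Local Open Scope classical_set_scope.

Section Defs.
Variables (R : comPzRingType) (M : lmodType R).

Definition submodule (N : set M) : Prop :=
  N 0 /\ (forall x y, N x -> N y -> N (x + y)) /\ (forall (r : R) x, N x -> N (r *: x)).

(* ideals of R (R itself included) *)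
Definition ideal (I : set R) : Prop :=
  I 0 /\ (forall a b, I a -> I b -> I (a + b)) /\ (forall r a, I a -> I (r * a)).

Definition idmul (I : set R) (N : set M) : set M :=
  [set x | exists n (r : 'I_n -> R) (y : 'I_n -> M),
      (forall i, I (r i)) /\ (forall i, N (y i)) /\ x = \sum_(i < n) r i *: y i].

Definition addsub (A B : set M) : set M :=
  [set x | exists a b, A a /\ B b /\ x = a + b].

Definition bigsub n (P : pred 'I_n) (K : 'I_n -> set M) : set M :=
  [set x | exists y : 'I_n -> M, (forall i, P i -> K i (y i)) /\
                                 x = \sum_(i < n | P i) y i].

Definition zerosub : set M := [set 0].
Arguments zerosub : clear implicits.

Definition Ann (N : set M) : set R := [set r | forall x, N x -> r *: x = 0].

Definition second (N : set M) : Prop :=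
  submodule N /\ N <> zerosub /\
  forall I, ideal I -> idmul I N = N \/ idmul I N = zerosub.

Definition min_second_rep n (K : 'I_n -> set M) : Prop :=
  (forall i, second (K i)) /\
  (forall i j, i != j -> Ann (K i) <> Ann (K j)) /\
  bigsub predT K = setT /\
  (forall j, ~ (K j `<=` bigsub (fun i => i != j) K)).

Definition direct_sum n (K : 'I_n -> set M) : Prop :=
  bigsub predT K = setT /\
  forall i, K i `&` bigsub (fun j => j != i) K = zerosub.

Definition PS_hollow (N : set M) : Prop :=
  submodule N /\
  forall I L, ideal I -> submodule L ->
    N `<=` addsub (idmul I setT) L -> N `<=` idmul I setT \/ N `<=` L.

Definition A_of (N : set M) : set (set R) := [set I | ideal I /\ N `<=` idmul I setT].

Definition H_of (N : set M) : set (set R) :=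
  [set I | A_of N I /\ forall J, A_of N J -> J `<=` I -> J = I].

(* intersection of I M over I in H_N (which is M when H_N is empty) *)
Definition In_of (N : set M) : set M :=
  [set x | forall I, H_of N I -> idmul I setT x].

Definition H_PS_hollow (H : set (set R)) (N : set M) : Prop :=
  PS_hollow N /\ H_of N = H.

Definition min_PS_hollow_rep n (H : 'I_n -> set (set R)) (K : 'I_n -> set M) : Prop :=
  (forall i, H_PS_hollow (H i) (K i)) /\
  (forall i j, i != j -> ~ (In_of (K i) `<=` In_of (K j))) /\
  bigsub predT K = setT /\
  (forall j, ~ (K j `<=` bigsub (fun i => i != j) K)).

Definition strongly_irreducible (N : set M) : Prop :=
  submodule N /\ N <> setT /\
  forall A B, submodule A -> submodule B -> A `&` B `<=` N -> A `<=` N \/ B `<=` N.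

Definition distributive_module : Prop :=
  forall A B C, submodule A -> submodule B -> submodule C ->
    A `&` addsub B C = addsub (A `&` B) (A `&` C).

End Defs.

(* Main.v *)
Require Import Defs.
From HB Require Import structures.
From mathcomp Require Import all_boot all_order all_algebra.
From mathcomp Require Import boolp classical_sets.
Set Implicit Arguments. Unset Strict Implicit. Unset Printing Implicit Defensive.
Import GRing.Theory.
Local Open Scope ring_scope.
Local Open Scope classical_set_scope.

Lemma pred_ind_card n (Q : pred 'I_n -> Prop) :
  (forall P : pred 'I_n, (forall k, ~~ P k) -> Q P) ->
  (forall (P : pred 'I_n) j, P j -> Q (fun k => P k && (k != j)) -> Q P) ->
  forall P, Q P.
Proof.
move=> H0 HS.
suff : forall m (P : pred 'I_n), (#|SimplPred P| <= m)%N -> Q P.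
  by move=> H P; exact: (H _ P (leqnn _)).
elim=> [|m IH] P.
  rewrite leqn0 => /eqP/card0_eq P0; apply: H0 => k; have := P0 k; rewrite !inE /= => -> //.
move=> Hc; case: (pickP P) => [j Pj|P0]; last by apply: H0 => k; rewrite P0.
apply: (HS P j Pj); apply: IH.
move: Hc; rewrite (cardD1x Pj) add1n ltnS.
by [].
Qed.

Lemma sub_sum (R : comPzRingType) (M : lmodType R) (N : set M) n (P : pred 'I_n) (y : 'I_n -> M) :
  submodule N -> (forall i, P i -> N (y i)) -> N (\sum_(i < n | P i) y i).
Proof.
move=> [N0 [ND NZ]] Hy; apply: (big_ind N) => //.
Qed.

Lemma bigsub_sub (R : comPzRingType) (M : lmodType R) n (P : pred 'I_n) (K : 'I_n -> set M) :
  (forall i, submodule (K i)) -> submodule (bigsub P K).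
Proof.
move=> HK; split; [|split].
- exists (fun _ => 0); split; first by move=> i _; case: (HK i).
  by rewrite big1.
- move=> x1 x2 [y1 [H1 ->]] [y2 [H2 ->]]; exists (fun i => y1 i + y2 i); split.
    by move=> i Pi; case: (HK i) => _ [D _]; apply: D; [apply: H1|apply: H2].
  by rewrite big_split.
- move=> r x [y [H ->]]; exists (fun i => r *: y i); split.
    by move=> i Pi; case: (HK i) => _ [_ Z]; apply: Z; apply: H.
  by rewrite scaler_sumr.
Qed.

Lemma K_in_bigsub (R : comPzRingType) (M : lmodType R) n (P : pred 'I_n) (K : 'I_n -> set M) j x :
  (forall i, submodule (K i)) -> P j -> K j x -> bigsub P K x.
Proof.
move=> HK Pj Kx; exists (fun k => if k == j then x else 0); split.
  by move=> i _; case: eqP => [->//|_]; case: (HK i).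
rewrite (bigD1 j) //= eqxx big1 ?addr0 //.
by move=> i /andP[_ /negbTE ->].
Qed.

Lemma bigsub_split (R : comPzRingType) (M : lmodType R) n (P : pred 'I_n) (K : 'I_n -> set M) j x :
  P j -> bigsub P K x -> addsub (K j) (bigsub (fun k => P k && (k != j)) K) x.
Proof.
move=> Pj [y [Hy ->]]; exists (y j), (\sum_(i < n | P i && (i != j)) y i); split.
  by apply: Hy.
split; last by rewrite (bigD1 j).
by exists y; split => // i /andP[Pi _]; apply: Hy.
Qed.

Lemma bigsub_pred0 (R : comPzRingType) (M : lmodType R) n (P : pred 'I_n) (K : 'I_n -> set M) x :
  (forall k, ~~ P k) -> bigsub P K x -> x = 0.
Proof.
move=> P0 [y [_ ->]]; rewrite big1 // => i Pi; by have := P0 i; rewrite Pi.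
Qed.
Definition pid (R : comPzRingType) (a : R) : set R := [set c | exists r, c = r * a].

Lemma pid_ideal (R : comPzRingType) (a : R) : ideal (pid a).
Proof.
split; [exists 0; by rewrite mul0r|split].
- move=> x y [r ->] [s ->]; exists (r + s); by rewrite mulrDl.
- move=> r x [s ->]; exists (r * s); by rewrite mulrA.
Qed.

Lemma ann_mulr (R : comPzRingType) (M : lmodType R) (N : set M) b c :
  Ann N b -> Ann N (c * b).
Proof. move=> Hb x Nx; by rewrite -scalerA Hb // scaler0. Qed.

Lemma second_nz (R : comPzRingType) (M : lmodType R) (N : set M) :
  second N -> exists x, N x /\ x != 0.
Proof.
move=> [[N0 _] [Nn _]]; apply: contrapT => Hn; apply: Nn.
apply/seteqP; split => x //=.
  move=> Nx; apply/eqP; apply: contrapT => /negP xn; apply: Hn; by exists x.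
by move=> ->.
Qed.

Lemma not_ann (R : comPzRingType) (M : lmodType R) (N : set M) a :
  ~ Ann N a -> exists x, N x /\ a *: x != 0.
Proof.
move=> Hn; apply: contrapT => Hx; apply: Hn => x Nx.
apply/eqP; apply: contrapT => /negP xn; apply: Hx; by exists x.
Qed.

Lemma second_principal (R : comPzRingType) (M : lmodType R) (N : set M) a :
  second N -> ~ Ann N a -> idmul (pid a) N = N.
Proof.
move=> HN Ha; case: (HN) => _ [_ /(_ _ (pid_ideal a))] [] // Hz.
have [x [Nx xn]] := not_ann Ha.
have : idmul (pid a) N (a *: x).
  exists 1%N, (fun _ => a), (fun _ => x); split; first by move=> _; exists 1; rewrite mul1r.
  split => //; by rewrite big_ord1.
by rewrite Hz /= => /eqP; rewrite (negbTE xn).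
Qed.

Lemma ann_prime (R : comPzRingType) (M : lmodType R) (N : set M) a b :
  second N -> ~ Ann N a -> ~ Ann N b -> ~ Ann N (a * b).
Proof.
move=> HN Ha Hb Hab; apply: Hb => y Ny.
have := Ny; rewrite -(second_principal HN Ha) => -[m [r [z [Hr [Hz ->]]]]].
rewrite scaler_sumr big1 // => i _.
have [c ->] := Hr i.
by rewrite scalerA mulrCA [b * a]mulrC -scalerA Hab ?scaler0.
Qed.
Lemma sep_elt (R : comPzRingType) (M : lmodType R) n (K : 'I_n -> set M) j :
  (forall i, second (K i)) ->
  (forall i j, i != j -> ~ (Ann (K i) `<=` Ann (K j))) ->
  exists a, (forall k, k != j -> Ann (K k) a) /\ ~ Ann (K j) a.
Proof.
move=> HK Hinc.
have ex : forall k, exists b, k != j -> Ann (K k) b /\ ~ Ann (K j) b.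
  move=> k; case: (eqVneq k j) => [->|kj]; first by exists 0.
  apply: contrapT => hne; apply: (Hinc k j kj) => b Hb; apply: contrapT => hnb.
  by apply: hne; exists b.
have [f Hf] := choice ex.
exists (\prod_(k | k != j) f k); split.
  move=> k kj; rewrite (bigD1 k) //= mulrC; apply: ann_mulr; by case: (Hf k kj).
apply: (big_ind (fun r => ~ Ann (K j) r)).
- have [x [Kx xn]] := second_nz (HK j) => H1; have := H1 x Kx; rewrite scale1r => /eqP.
  by rewrite (negbTE xn).
- by move=> x y; apply: ann_prime.
- by move=> k kj; case: (Hf k kj).
Qed.

Lemma pidM_sub (R : comPzRingType) (M : lmodType R) n (K : 'I_n -> set M) j a :
  (forall i, submodule (K i)) -> bigsub predT K = setT ->
  (forall k, k != j -> Ann (K k) a) ->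
  idmul (pid a) setT `<=` K j.
Proof.
move=> HK Hall Ha x [m [r [y [Hr [_ ->]]]]].
apply: sub_sum => // t _.
have : bigsub predT K (y t) by rewrite Hall.
move=> [z [Hz ->]]; have [c ->] := Hr t.
rewrite scaler_sumr (bigD1 j) //= big1 ?addr0.
  rewrite -scalerA; have [_ [_ Z]] := HK j; apply: (Z); apply: (Z); exact: Hz.
by move=> k kj; rewrite -scalerA (Ha k kj) ?scaler0 //; apply: Hz.
Qed.

Lemma part1_core (R : comPzRingType) (M : lmodType R) n (K : 'I_n -> set M) (N : set M) i :
  (forall i, second (K i)) ->
  (forall i j, i != j -> ~ (Ann (K i) `<=` Ann (K j))) ->
  (forall i j, i != j -> K i `&` K j = [set 0]) ->
  bigsub predT K = setT ->
  PS_hollow N -> N `<=` K i ->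
  forall P, ~~ P i -> N `<=` bigsub P K -> N `<=` [set 0].
Proof.
move=> HK Hinc Hpw Hall HN NK.
have HKs : forall i, submodule (K i) by move=> k; case: (HK k).
apply: pred_ind_card.
  by move=> P P0 _ NP x Nx; have := bigsub_pred0 P0 (NP x Nx).
move=> P j Pj IH Pi NP.
have ji : j != i by apply: contraNneq Pi => <-.
have [a [Ha Hja]] := sep_elt j HK Hinc.
have := HN.2 (pid a) (bigsub (fun k => P k && (k != j)) K) (pid_ideal a) (bigsub_sub _ HKs).
case.
- move=> x Nx; have [z [w [Kz [Kw ->]]]] := bigsub_split Pj (NP x Nx).
  exists z, w; split => //.
  have : idmul (pid a) (K j) z by rewrite (second_principal (HK j) Hja).
  move=> [m [r [y [Hr [_ ->]]]]]; by exists m, r, y.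
- move=> NI x Nx; rewrite -(Hpw i j); first by split; [apply: NK|apply: (pidM_sub HKs Hall Ha); apply: NI].
  by rewrite eq_sym.
- apply: IH; by rewrite (negbTE Pi).
Qed.
Lemma submoduleI (R : comPzRingType) (M : lmodType R) (A B : set M) :
  submodule A -> submodule B -> submodule (A `&` B).
Proof.
move=> [A0 [AD AZ]] [B0 [BD BZ]]; split; first by [].
split; first by move=> x y [? ?] [? ?]; split; [apply: AD|apply: BD].
by move=> r x [? ?]; split; [apply: AZ|apply: BZ].
Qed.

Lemma part1 (R : comPzRingType) (M : lmodType R) (n : nat) (K : 'I_n -> set M) :
     min_second_rep K ->
     (forall i j, i != j -> ~ (Ann (K i) `<=` Ann (K j))) ->
     (forall i, PS_hollow (K i `&` bigsub (fun j => j != i) K)) ->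
     (direct_sum K <-> (forall i j, i != j -> K i `&` K j = [set 0])).
Proof.
move=> [HK [_ [Hall Hmin]]] Hinc HPS.
have HKs : forall i, submodule (K i) by move=> k; case: (HK k).
split.
- move=> [_ Hds] i j ij; apply/seteqP; split => x.
    move=> [Kix Kjx]; have <- : K i `&` bigsub (fun j => j != i) K = [set 0] := Hds i; split => //.
    apply: (K_in_bigsub HKs (j := j)) => //; by rewrite eq_sym.
  by move=> /= ->; split; [case: (HKs i)|case: (HKs j)].
- move=> Hpw; split => // i; apply/seteqP; split.
    apply: (@part1_core _ _ _ _ _ i HK Hinc Hpw Hall (HPS i) _ (fun j => j != i)).
    + by move=> x [].
    + by rewrite negbK.
    + by move=> x [].
  move=> x /= ->; split; first by case: (HKs i).
  by case: (bigsub_sub (fun j => j != i) HKs).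
Qed.

Lemma part2 (R : comPzRingType) (M : lmodType R) :
  (distributive_module M ->
   forall (n : nat) (H : 'I_n -> set (set R)) (K : 'I_n -> set M),
     min_PS_hollow_rep H K ->
     (forall i L, submodule L -> L `<=` K i ->
        L = [set 0] \/ strongly_irreducible L \/ H_PS_hollow (H i) L) ->
     direct_sum K).
Proof.
move=> Hdist n H K [HH [Hinc [Hall Hmin]]] Hsub.
have HKs : forall i, submodule (K i) by move=> k; case: (HH k) => [[]].
have SIc : forall i j, i != j -> ~ strongly_irreducible (K i `&` K j).
  move=> i j ij [_ [_ HSI]].
  case: (HSI (K i) (K j) (HKs i) (HKs j) (fun x h => h)) => Hs.
    apply: (Hmin i) => x Kx; apply: (K_in_bigsub HKs (j := j)).
      by rewrite eq_sym.
    by case: (Hs x Kx).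
  apply: (Hmin j) => x Kx; apply: (K_in_bigsub HKs (j := i)) => //.
  by case: (Hs x Kx).
have Hpw : forall i j, i != j -> K i `&` K j = [set 0].
  move=> i j ij.
  have sL := submoduleI (HKs i) (HKs j).
  case: (Hsub i _ sL (fun x h => h.1)) => [//|[/(SIc _ _ ij)//|Hi]].
  case: (Hsub j _ sL (fun x h => h.2)) => [//|[/(SIc _ _ ij)//|Hj]].
  exfalso; apply: (Hinc i j ij).
  have eH : H i = H j by rewrite -Hi.2 Hj.2.
  move=> x Hx I HI; apply: Hx; by rewrite (HH i).2 eH -(HH j).2.
split => // i; apply/seteqP; split; last first.
  move=> x /= ->; split; first by case: (HKs i).
  by case: (bigsub_sub (fun j => j != i) HKs).
suff : forall P : pred 'I_n, ~~ P i -> K i `&` bigsub P K `<=` [set 0].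
  by apply; rewrite negbK.
apply: pred_ind_card.
  by move=> P P0 _ x [_ Hx]; have := bigsub_pred0 P0 Hx.
move=> P j Pj IH Pi x [Kx Bx].
have ij : i != j by apply: contraNneq Pi => ->.
have := Hdist _ _ _ (HKs i) (HKs j) (bigsub_sub (fun k => P k && (k != j)) HKs).
move/seteqP => [+ _] => /(_ x (conj Kx (bigsub_split Pj Bx))).
move=> [u [v [Hu [Hv ->]]]].
have -> : u = 0 by move: Hu; rewrite (Hpw i j ij).
have -> : v = 0.
  by apply: (IH _ v Hv); rewrite (negbTE Pi).
by rewrite addr0.
Qed.

Theorem theorem5p21 (R : comPzRingType) (M : lmodType R) :
  (exists x : M, x != 0) ->
  (* (1) *)
  (forall (n : nat) (K : 'I_n -> set M),
     min_second_rep K ->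
     (forall i j, i != j -> ~ (Ann (K i) `<=` Ann (K j))) ->
     (forall i, PS_hollow (K i `&` bigsub (fun j => j != i) K)) ->
     (direct_sum K <-> (forall i j, i != j -> K i `&` K j = [set 0])))
  /\
  (* (2) *)
  (distributive_module M ->
   forall (n : nat) (H : 'I_n -> set (set R)) (K : 'I_n -> set M),
     min_PS_hollow_rep H K ->
     (forall i L, submodule L -> L `<=` K i ->
        L = [set 0] \/ strongly_irreducible L \/ H_PS_hollow (H i) L) ->
     direct_sum K).
Proof.
move=> _; split; [exact: part1|exact: part2].
Qed.
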